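(* Let $n_{xL},n_{yL},n_{xR},n_{yR}\ge 2$ and let $h_{xL},h_{xR}>0$. Assume: (i) $H_{xL}\in\mathbb{R}^{n_{xL}\times n_{xL}}$, $H_{yL}\in\mathbb{R}^{n_{yL}\times n_{yL}}$, $H_{xR}\in\mathbb{R}^{n_{xR}\times n_{xR}}$, $H_{yR}\in\mathbb{R}^{n_{yR}\times n_{yR}}$ are diagonal positive definite; (ii) $M_{xL}, M_{xR}$ are symmetric and can be written as $M_{xL}=\tilde M_{xL}+h_{xL}\alpha(E_{0L}S_{xL})^T(E_{0L}S_{xL})$, $M_{xR}=\tilde M_{xR}+h_{xR}\alpha(E_{0R}S_{xR})^T(E_{0R}S_{xR})$ with $\tilde M_{xL},\tilde M_{xR}$ symmetric positive semidefinite and a constant $\alpha>0$, where $S_{xL}\in\mathbb{R}^{n_{xL}\times n_{xL}}$, $S_{xR}\in\mathbb{R}^{n_{xR}\times n_{xR}}$ are arbitrary real matrices; (iii) $I_{F2C}\in\mathbb{R}^{n_{yL}\times n_{yR}}$, $I_{C2F}\in\mathbb{R}^{n_{yR}\times n_{yL}}$ satisfy $H_{yR}I_{C2F}=(H_{yL}I_{F2C})^T$ and both $H_{yL}(I_{yL}-I_{F2C}I_{C2F})$ and $H_{yR}(I_{yR}-I_{C2F}I_{F2C})$ are positive semidefinite; (iv) $\tau\ge\max\big(\frac{1}{2\alpha h_{xL}},\frac{1}{2\alpha h_{xR}}\big)$ (in particular, if $h_{xR}=h_{xL}/2$ this reads $\tau\ge \frac{1}{\alpha h_{xL}}$). Consider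 the semidiscrete system (boldface denotes Kronecker extension: $\mathbf{A}_{xL}=A_{xL}\otimes I_{yL}$, $\mathbf{A}_{xR}=A_{xR}\otimes I_{yR}$) $$\mathbf{u}_{tt}=\big(H_{xL}^{-1}(-M_{xL}+E_{0L}S_{xL})\otimes I_{yL}\big)\mathbf{u}+\tfrac12\mathbf{H}_{xL}^{-1}\mathbf{S}_{xL}^T\mathbf{w}_L-\tau\mathbf{H}_{xL}^{-1}\mathbf{w}_L-\tfrac12\mathbf{H}_{xL}^{-1}\big(\mathbf{E}_{0L}\mathbf{S}_{xL}\mathbf{u}-(E_{LR}\otimes I_{F2C})\mathbf{S}_{xR}\mathbf{v}\big),$$ $$\mathbf{v}_{tt}=\big(H_{xR}^{-1}(-M_{xR}-E_{0R}S_{xR})\otimes I_{yR}\big)\mathbf{v}-\tfrac12\mathbf{H}_{xR}^{-1}\mathbf{S}_{xR}^T\mathbf{w}_R-\tau\mathbf{H}_{xR}^{-1}\mathbf{w}_R+\tfrac12\mathbf{H}_{xR}^{-1}\big(\mathbf{E}_{0R}\mathbf{S}_{xR}\mathbf{v}-(E_{RL}\otimes I_{C2F})\mathbf{S}_{xL}\mathbf{u}\big),$$ where $\mathbf{w}_L=\mathbf{E}_{0L}\mathbf{u}-(E_{LR}\otimes I_{F2C})\mathbf{v}$ and $\mathbf{w}_R=\mathbf{E}_{0R}\mathbf{v}-(E_{RL}\otimes I_{C2F})\mathbf{u}$. Define $$\begin{aligned}E=&\ \mathbf{u}_t^T(H_{xL}\otimes H_{yL})\mathbf{u}_t+\mathbf{v}_t^T(H_{xR}\otimes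 H_{yR})\mathbf{v}_t\\&+\mathbf{u}^T(M_{xL}\otimes H_{yL})\mathbf{u}-\mathbf{u}^T(E_{0L}S_{xL}\otimes H_{yL})\mathbf{u}+\tau\mathbf{u}^T(E_{0L}\otimes H_{yL})\mathbf{u}\\&+\mathbf{v}^T(M_{xR}\otimes H_{yR})\mathbf{v}+\mathbf{v}^T(E_{0R}S_{xR}\otimes H_{yR})\mathbf{v}+\tau\mathbf{v}^T(E_{0R}\otimes H_{yR})\mathbf{v}\\&+\mathbf{u}^T(S_{xL}^TE_{LR}\otimes H_{yL}I_{F2C})\mathbf{v}-\mathbf{v}^T(S_{xR}^TE_{RL}\otimes H_{yR}I_{C2F})\mathbf{u}-2\tau\mathbf{u}^T(E_{LR}\otimes H_{yL}I_{F2C})\mathbf{v}.\end{aligned}$$ Then $E\ge 0$ for all $\mathbf{u},\mathbf{u}_t\in\mathbb{R}^{n_{xL}n_{yL}}$, $\mathbf{v},\mathbf{v}_t\in\mathbb{R}^{n_{xR}n_{yR}}$, and $\frac{d}{dt}E=0$ along every smooth solution of the system; hence $E$ is a conserved nonnegative discrete energy (an energy estimate holds).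
   Context: This is the summation-by-parts / simultaneous-approximation-term (SBP–SAT) discretization of the 2D wave equation $U_{tt}=U_{xx}+U_{yy}$ on two blocks (left block $n_{xL}\times n_{yL}$ grid, right block $n_{xR}\times n_{yR}$ grid) meeting at a vertical interface (right edge of the left block, left edge of the right block); only $x$-direction terms and interface coupling terms are retained (outer boundary terms and $y$-derivative terms are omitted). Grid vectors use the $x$-index as the outer Kronecker index. $E_{0L}\in\mathbb{R}^{n_{xL}\times n_{xL}}$ has a single nonzero entry $1$ at $(n_{xL},n_{xL})$; $E_{0R}\in\mathbb{R}^{n_{xR}\times n_{xR}}$ has a single nonzero entry $1$ at $(1,1)$; $E_{LR}\in\mathbb{R}^{n_{xL}\times n_{xR}}$ has a single nonzero entry $1$ at $(n_{xL},1)$; $E_{RL}=E_{LR}^T$. $I_{xL},I_{yL},I_{xR},I_{yR}$ are identity matrices of the indicated sizes. In the SBP setting $H_{x}$ is the SBP norm, $D_2=H_x^{-1}(-M+BS)$ is the second-derivative SBP operator with $S$ approximating the first derivative at the boundary, $\tau$ is the interface penalty parameter, and $I_{F2C},I_{C2F}$ are interface interpolation operators between the coarse (left) and fine (right) interface grids; hypothesis (ii) is the so-called borrowing property of $M$. *)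

(* Defs.v *)
(* real analysis (time derivatives) is needed, so matrices are
   represented as functions nat -> nat -> R with explicit dimensions,
   0-based indices, and finite sums rsum. *)
From Stdlib Require Import Reals Arith.
Open Scope R_scope.

Fixpoint rsum (n : nat) (f : nat -> R) : R :=
  match n with O => 0 | S k => rsum k f + f k end.

Definition mat := nat -> nat -> R.
Definition vec := nat -> R.

Definition mmul (k : nat) (A B : mat) : mat := fun i j => rsum k (fun l => A i l * B l j).
Definition mvec (k : nat) (A : mat) (x : vec) : vec := fun i => rsum k (fun j => A i j * x j).
Definition dot (n : nat) (x y : vec) : R := rsum n (fun i => x i * y i).
Definition bform (m n : nat) (x : vec) (A : mat) (y : vec) : R := dot m x (mvec n A y).
Definition qform (n : nat) (A : mat) (x : vec) : R := bform n n x A x.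

Definition tr (A : mat) : mat := fun i j => A j i.
Definition madd (A B : mat) : mat := fun i j => A i j + B i j.
Definition mopp (A : mat) : mat := fun i j => - A i j.
Definition mscale (c : R) (A : mat) : mat := fun i j => c * A i j.
Definition vadd (x y : vec) : vec := fun i => x i + y i.
Definition vopp (x : vec) : vec := fun i => - x i.
Definition vscale (c : R) (x : vec) : vec := fun i => c * x i.
Definition vsub (x y : vec) : vec := vadd x (vopp y).

Definition idm : mat := fun i j => if Nat.eqb i j then 1 else 0.
Definition unitm (a b : nat) : mat :=
  fun i j => if andb (Nat.eqb i a) (Nat.eqb j b) then 1 else 0.
Definition diag_inv (A : mat) : mat := fun i j => if Nat.eqb i j then / A i i else 0.

(* Kronecker product A (x) B where B is p x q; the index of A is the outer one:
   (A (x) B)(i,j) = A(i/p, j/q) * B(i mod p, j mod q). *)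
Definition kron (p q : nat) (A B : mat) : mat :=
  fun i j => A (i / p)%nat (j / q)%nat * B (i mod p)%nat (j mod q)%nat.

(* E_{0L} (n x n, entry (n,n) in 1-based), E_{0R} (entry (1,1)),
   E_{LR} (nL x nR, entry (nL,1)) *)
Definition E0L (nxL : nat) : mat := unitm (nxL - 1) (nxL - 1).
Definition E0R : mat := unitm 0 0.
Definition ELR (nxL : nat) : mat := unitm (nxL - 1) 0.
Definition ERL (nxL : nat) : mat := tr (ELR nxL).

Definition mat_eq (m n : nat) (A B : mat) : Prop :=
  forall i j, (i < m)%nat -> (j < n)%nat -> A i j = B i j.
Definition is_symm (n : nat) (A : mat) : Prop :=
  forall i j, (i < n)%nat -> (j < n)%nat -> A i j = A j i.
Definition is_psd (n : nat) (A : mat) : Prop := forall x : vec, 0 <= qform n A x.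
Definition is_diag_pd (n : nat) (A : mat) : Prop :=
  (forall i j, (i < n)%nat -> (j < n)%nat -> i <> j -> A i j = 0) /\
  (forall i, (i < n)%nat -> 0 < A i i).

Definition rhs_u (nxL nyL nxR nyR : nat) (HxL MxL SxL SxR IF2C : mat) (tau : R)
  (u v : vec) : vec :=
  let NL := (nxL * nyL)%nat in
  let NR := (nxR * nyR)%nat in
  let bI A := kron nyL nyL A idm in
  let HiL := bI (diag_inv HxL) in
  let ELRF := kron nyL nyR (ELR nxL) IF2C in
  let SRb := kron nyR nyR SxR idm in
  let wL := vsub (mvec NL (bI (E0L nxL)) u) (mvec NR ELRF v) in
  vadd (vadd (vadd
    (mvec NL (bI (mmul nxL (diag_inv HxL) (madd (mopp MxL) (mmul nxL (E0L nxL) SxL)))) u)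
    (vscale (1/2) (mvec NL HiL (mvec NL (bI (tr SxL)) wL))))
    (vopp (vscale tau (mvec NL HiL wL))))
    (vopp (vscale (1/2) (mvec NL HiL
       (vsub (mvec NL (bI (E0L nxL)) (mvec NL (bI SxL) u)) (mvec NR ELRF (mvec NR SRb v)))))).

Definition rhs_v (nxL nyL nxR nyR : nat) (HxR MxR SxL SxR IC2F : mat) (tau : R)
  (u v : vec) : vec :=
  let NL := (nxL * nyL)%nat in
  let NR := (nxR * nyR)%nat in
  let bI A := kron nyR nyR A idm in
  let HiR := bI (diag_inv HxR) in
  let ERLC := kron nyR nyL (ERL nxL) IC2F in
  let SLb := kron nyL nyL SxL idm in
  let wR := vsub (mvec NR (bI E0R) v) (mvec NL ERLC u) in
  vadd (vadd (vadd
    (mvec NR (bI (mmul nxR (diag_inv HxR) (madd (mopp MxR) (mopp (mmul nxR E0R SxR))))) v)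
    (vopp (vscale (1/2) (mvec NR HiR (mvec NR (bI (tr SxR)) wR)))))
    (vopp (vscale tau (mvec NR HiR wR))))
    (vscale (1/2) (mvec NR HiR
       (vsub (mvec NR (bI E0R) (mvec NR (bI SxR) v)) (mvec NL ERLC (mvec NL SLb u))))).

Definition energy (nxL nyL nxR nyR : nat)
  (HxL HyL HxR HyR MxL MxR SxL SxR IF2C IC2F : mat) (tau : R)
  (u ut v vt : vec) : R :=
  let NL := (nxL * nyL)%nat in
  let NR := (nxR * nyR)%nat in
  qform NL (kron nyL nyL HxL HyL) ut + qform NR (kron nyR nyR HxR HyR) vt
  + qform NL (kron nyL nyL MxL HyL) u
  - qform NL (kron nyL nyL (mmul nxL (E0L nxL) SxL) HyL) u
  + tau * qform NL (kron nyL nyL (E0L nxL) HyL) u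
  + qform NR (kron nyR nyR MxR HyR) v
  + qform NR (kron nyR nyR (mmul nxR E0R SxR) HyR) v
  + tau * qform NR (kron nyR nyR E0R HyR) v
  + bform NL NR u (kron nyL nyR (mmul nxL (tr SxL) (ELR nxL)) (mmul nyL HyL IF2C)) v
  - bform NR NL v (kron nyR nyL (mmul nxR (tr SxR) (ERL nxL)) (mmul nyR HyR IC2F)) u
  - 2 * tau * bform NL NR u (kron nyL nyR (ELR nxL) (mmul nyL HyL IF2C)) v.

(* Main.v *)
Require Import Defs.
From Stdlib Require Import Reals Arith Lia Lra Psatz Setoid Morphisms.
Open Scope R_scope.

Lemma rsum_ext n f g : (forall i, (i < n)%nat -> f i = g i) -> rsum n f = rsum n g.
Proof. induction n; simpl; intros H; [reflexivity|]. rewrite IHn by (intros; apply H; lia). rewrite H by lia. reflexivity. Qed.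

Lemma rsum_plus n f g : rsum n (fun i => f i + g i) = rsum n f + rsum n g.
Proof. induction n; simpl; [ring|rewrite IHn; ring]. Qed.

Lemma rsum_minus n f g : rsum n (fun i => f i - g i) = rsum n f - rsum n g.
Proof. induction n; simpl; [ring|rewrite IHn; ring]. Qed.

Lemma rsum_scal n c f : rsum n (fun i => c * f i) = c * rsum n f.
Proof. induction n; simpl; [ring|rewrite IHn; ring]. Qed.

Lemma rsum_scal_r n c f : rsum n (fun i => f i * c) = rsum n f * c.
Proof. induction n; simpl; [ring|rewrite IHn; ring]. Qed.

Lemma rsum_zero n f : (forall i, (i < n)%nat -> f i = 0) -> rsum n f = 0.
Proof. induction n; simpl; intros H; [reflexivity|]. rewrite IHn by (intros; apply H; lia). rewrite H by lia. ring. Qed.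

Lemma rsum_nonneg n f : (forall i, (i < n)%nat -> 0 <= f i) -> 0 <= rsum n f.
Proof. induction n; simpl; intros H; [lra|]. assert (0 <= f n) by (apply H; lia).
  assert (0 <= rsum n f) by (apply IHn; intros; apply H; lia). lra. Qed.

Lemma rsum_swap m n f : rsum m (fun i => rsum n (fun j => f i j)) = rsum n (fun j => rsum m (fun i => f i j)).
Proof. induction m; simpl.
  - symmetry; apply rsum_zero; auto.
  - rewrite IHm, <- rsum_plus. reflexivity. Qed.

Lemma rsum_app k n f : rsum (k + n) f = rsum k f + rsum n (fun i => f (k + i)%nat).
Proof. induction n; simpl.
  - rewrite Nat.add_0_r; ring.
  - rewrite Nat.add_succ_r; simpl; rewrite IHn; ring. Qed.

Lemma rsum_block p q f : rsum (p*q) f = rsum p (fun a => rsum q (fun b => f (a*q+b)%nat)).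
Proof. induction p; simpl; [reflexivity|].
  rewrite Nat.add_comm, rsum_app, IHp. reflexivity. Qed.

Lemma rsum_single n k f : (k < n)%nat -> (forall i, (i < n)%nat -> i <> k -> f i = 0) -> rsum n f = f k.
Proof. induction n; intros Hk H; [lia|]. simpl.
  destruct (Nat.eq_dec k n) as [->|Hne].
  - rewrite rsum_zero; [ring|]. intros; apply H; lia.
  - rewrite IHn by (try lia; intros; apply H; lia). rewrite (H n) by lia. ring. Qed.

Definition indk (k i : nat) : R := if Nat.eqb i k then 1 else 0.

Lemma ind_eq k : indk k k = 1.
Proof. unfold indk; rewrite Nat.eqb_refl; reflexivity. Qed.
Lemma ind_ne k i : i <> k -> indk k i = 0.
Proof. intros; unfold indk; destruct (Nat.eqb_spec i k); [lia|reflexivity]. Qed.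

Lemma rsum_ind_l n k f : (k < n)%nat -> rsum n (fun i => indk k i * f i) = f k.
Proof. intros Hk. rewrite (rsum_single n k); [rewrite ind_eq; ring|auto|].
  intros; rewrite ind_ne by auto; ring. Qed.
Lemma rsum_ind_r n k f : (k < n)%nat -> rsum n (fun i => f i * indk k i) = f k.
Proof. intros Hk. rewrite (rsum_single n k); [rewrite ind_eq; ring|auto|].
  intros; rewrite ind_ne by auto; ring. Qed.

Lemma unitm_ind a b i j : unitm a b i j = indk a i * indk b j.
Proof. unfold unitm, indk; destruct (Nat.eqb i a), (Nat.eqb j b); simpl; ring. Qed.
Lemma idm_ind i j : idm i j = indk i j.
Proof. unfold idm, indk; rewrite Nat.eqb_sym; reflexivity. Qed.

Lemma div_blk q c d : (d < q)%nat -> ((c*q+d)/q = c)%nat.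
Proof. intros; rewrite Nat.div_add_l by lia. rewrite Nat.div_small by lia. lia. Qed.
Lemma mod_blk q c d : (d < q)%nat -> ((c*q+d) mod q = d)%nat.
Proof. intros; rewrite Nat.add_comm, Nat.Div0.mod_add, Nat.mod_small; lia. Qed.

Lemma mvec_kron p q m A B y i : mvec (m*q) (kron p q A B) y i =
  rsum m (fun c => A (i/p)%nat c * rsum q (fun d => B (i mod p)%nat d * y (c*q+d)%nat)).
Proof. unfold mvec; rewrite rsum_block; apply rsum_ext; intros c Hc.
  rewrite <- rsum_scal; apply rsum_ext; intros d Hd. unfold kron.
  rewrite div_blk, mod_blk by auto. ring. Qed.

Lemma mvec_kron_blk p q m A B y a b : (b < p)%nat -> mvec (m*q) (kron p q A B) y (a*p+b)%nat =
  rsum m (fun c => A a c * rsum q (fun d => B b d * y (c*q+d)%nat)).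
Proof. intros; rewrite mvec_kron, div_blk, mod_blk by auto; reflexivity. Qed.

Lemma tr_kron p q A B : tr (kron p q A B) = kron q p (tr A) (tr B).
Proof. reflexivity. Qed.

Lemma dot_mvec_tr m n x A y : dot m x (mvec n A y) = dot n y (mvec m (tr A) x).
Proof. unfold dot, mvec, tr.
  rewrite (rsum_ext m _ (fun i => rsum n (fun j => x i * (A i j * y j)))) by (intros; rewrite <- rsum_scal; reflexivity).
  rewrite rsum_swap. apply rsum_ext; intros j Hj. rewrite <- rsum_scal. apply rsum_ext; intros; ring. Qed.

Lemma dot_vadd n x f g : dot n x (vadd f g) = dot n x f + dot n x g.
Proof. unfold dot, vadd. rewrite <- rsum_plus. apply rsum_ext; intros; ring. Qed.
Lemma dot_vsub n x f g : dot n x (vsub f g) = dot n x f - dot n x g.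
Proof. unfold dot, vsub, vadd, vopp. rewrite <- rsum_minus. apply rsum_ext; intros; ring. Qed.
Lemma dot_vscale n x c f : dot n x (vscale c f) = c * dot n x f.
Proof. unfold dot, vscale. rewrite <- rsum_scal. apply rsum_ext; intros; ring. Qed.
Lemma dot_zero n x f : (forall i, (i<n)%nat -> f i = 0) -> dot n x f = 0.
Proof. intros; unfold dot; apply rsum_zero; intros; rewrite H by auto; ring. Qed.

Lemma dpl_ext_val f t l l' : derivable_pt_lim f t l -> l = l' -> derivable_pt_lim f t l'.
Proof. intros H ->; exact H. Qed.
Lemma dpl_plus f g t a b : derivable_pt_lim f t a -> derivable_pt_lim g t b ->
  derivable_pt_lim (fun s => f s + g s) t (a+b).
Proof. intros; exact (derivable_pt_lim_plus f g t a b H H0). Qed.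
Lemma dpl_minus f g t a b : derivable_pt_lim f t a -> derivable_pt_lim g t b ->
  derivable_pt_lim (fun s => f s - g s) t (a-b).
Proof. intros; exact (derivable_pt_lim_minus f g t a b H H0). Qed.
Lemma dpl_mult f g t a b : derivable_pt_lim f t a -> derivable_pt_lim g t b ->
  derivable_pt_lim (fun s => f s * g s) t (a * g t + f t * b).
Proof. intros; exact (derivable_pt_lim_mult f g t a b H H0). Qed.
Lemma dpl_scal c f t a : derivable_pt_lim f t a -> derivable_pt_lim (fun s => c * f s) t (c * a).
Proof. intros H. eapply dpl_ext_val.
  - apply (dpl_mult (fun _ => c) f). apply (derivable_pt_lim_const c). exact H.
  - ring. Qed.
Lemma rsum_deriv n (f : nat -> R -> R) f' t :
  (forall i, (i < n)%nat -> derivable_pt_lim (f i) t (f' i)) ->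
  derivable_pt_lim (fun s => rsum n (fun i => f i s)) t (rsum n f').
Proof. induction n; intros H; simpl.
  - apply (derivable_pt_lim_const 0).
  - apply dpl_plus. apply IHn; intros; apply H; lia. apply H; lia. Qed.

Lemma bform_deriv m n A (x y : R -> vec) x' y' t :
 (forall i, (i<m)%nat -> derivable_pt_lim (fun s => x s i) t (x' i)) ->
 (forall j, (j<n)%nat -> derivable_pt_lim (fun s => y s j) t (y' j)) ->
 derivable_pt_lim (fun s => bform m n (x s) A (y s)) t
   (dot m x' (mvec n A (y t)) + dot n y' (mvec m (tr A) (x t))).
Proof. intros Hx Hy. eapply dpl_ext_val.
  - unfold bform, dot, mvec.
    apply (rsum_deriv m (fun i s => x s i * rsum n (fun j => A i j * y s j))).
    intros i Hi. apply dpl_mult. apply Hx; auto.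
    apply (rsum_deriv n (fun j s => A i j * y s j)). intros j Hj. apply dpl_scal. apply Hy; auto.
  - rewrite rsum_plus. f_equal. rewrite <- dot_mvec_tr. reflexivity. Qed.

Lemma dot_vopp n x f : dot n x (vopp f) = - dot n x f.
Proof. unfold dot, vopp. replace (- rsum n (fun i => x i * f i)) with ((-1) * rsum n (fun i => x i * f i)) by ring.
  rewrite <- rsum_scal. apply rsum_ext; intros; ring. Qed.

Lemma ent_E0S m k S a c : (k < m)%nat -> mmul m (unitm k k) S a c = indk k a * S k c.
Proof. intros Hk; unfold mmul.
  rewrite (rsum_ext _ _ (fun l => indk k l * (indk k a * S l c))) by (intros; rewrite unitm_ind; ring).
  rewrite rsum_ind_l by auto; reflexivity. Qed.

Lemma ent_trSE m k j S a c : (k < m)%nat -> mmul m (tr S) (unitm k j) a c = S k a * indk j c.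
Proof. intros Hk; unfold mmul, tr.
  rewrite (rsum_ext _ _ (fun l => indk k l * (S l a * indk j c))) by (intros; rewrite unitm_ind; ring).
  rewrite rsum_ind_l by auto; reflexivity. Qed.

Lemma ent_trStrE n k j S c a : (j < n)%nat -> mmul n (tr S) (tr (unitm k j)) c a = S j c * indk k a.
Proof. intros Hj; unfold mmul. unfold tr at 1 2.
  rewrite (rsum_ext _ _ (fun l => indk j l * (S l c * indk k a))) by (intros; rewrite unitm_ind; ring).
  rewrite rsum_ind_l by auto; reflexivity. Qed.

Lemma dinv_ind H a c : diag_inv H a c = indk a c * / H a a.
Proof. unfold diag_inv, indk. rewrite Nat.eqb_sym. destruct (Nat.eqb c a); ring. Qed.

Lemma ent_dinv m H X a c : (a < m)%nat -> mmul m (diag_inv H) X a c = / H a a * X a c.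
Proof. intros Ha; unfold mmul.
  rewrite (rsum_ext _ _ (fun l => indk a l * (/ H a a * X l c))) by (intros; rewrite dinv_ind; ring).
  rewrite rsum_ind_l by auto; reflexivity. Qed.

Definition offdiag0 (n : nat) (D : mat) : Prop :=
  forall i j, (i < n)%nat -> (j < n)%nat -> i <> j -> D i j = 0.

Lemma diag_coll_r n D i f : offdiag0 n D -> (i < n)%nat -> rsum n (fun j => D i j * f j) = D i i * f i.
Proof. intros HD Hi. rewrite (rsum_single n i); auto. intros j Hj Hne. rewrite HD by auto. ring. Qed.
Lemma diag_coll_l n D i f : offdiag0 n D -> (i < n)%nat -> rsum n (fun j => D j i * f j) = D i i * f i.
Proof. intros HD Hi. rewrite (rsum_single n i); auto. intros j Hj Hne. rewrite HD by auto. ring. Qed.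

Lemma ent_DX p D X b d : offdiag0 p D -> (b < p)%nat -> mmul p D X b d = D b b * X b d.
Proof. intros; unfold mmul; apply (diag_coll_r p D b (fun l => X l d)); auto. Qed.

Lemma kron_idm_pt m p A z a b : (b < p)%nat ->
  mvec (m*p) (kron p p A idm) z (a*p+b)%nat = rsum m (fun c => A a c * z (c*p+b)%nat).
Proof. intros Hb. rewrite mvec_kron_blk by auto. apply rsum_ext; intros c Hc. f_equal.
  rewrite (rsum_ext _ _ (fun d => indk b d * z (c*p+d)%nat)) by (intros; rewrite idm_ind; ring).
  rewrite rsum_ind_l by auto; reflexivity. Qed.

Lemma dinv_pt m p H z a b : (a < m)%nat -> (b < p)%nat ->
  mvec (m*p) (kron p p (diag_inv H) idm) z (a*p+b)%nat = / H a a * z (a*p+b)%nat.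
Proof. intros Ha Hb. rewrite kron_idm_pt by auto.
  rewrite (rsum_ext _ _ (fun c => indk a c * (/ H a a * z (c*p+b)%nat))) by (intros; rewrite dinv_ind; ring).
  rewrite rsum_ind_l by auto; reflexivity. Qed.

Lemma kron_diag_pt m p q A D z a b : offdiag0 p D -> (b < p)%nat -> p = q ->
  mvec (m*q) (kron p q A D) z (a*p+b)%nat = rsum m (fun c => A a c * (D b b * z (c*q+b)%nat)).
Proof. intros HD Hb <-. rewrite mvec_kron_blk by auto. apply rsum_ext; intros c Hc. f_equal.
  apply (diag_coll_r p D b (fun d => z (c*p+d)%nat)); auto. Qed.

#[export] Instance rsum_proper n : Proper (pointwise_relation nat eq ==> eq) (rsum n).
Proof. intros f g H. apply rsum_ext; intros; apply H. Qed.

Lemma W1 m p k z c b : (b < p)%nat -> (k < m)%nat ->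
  mvec (m*p) (kron p p (unitm k k) idm) z (c*p+b)%nat = indk k c * z (k*p+b)%nat.
Proof. intros Hb Hk. rewrite kron_idm_pt by auto.
  setoid_rewrite unitm_ind. rewrite (rsum_single m k); auto.
  - rewrite ind_eq; ring.
  - intros; rewrite (ind_ne k i) by auto; ring. Qed.

Lemma W2 n p q k I z c b : (b < p)%nat -> (0 < n)%nat ->
  mvec (n*q) (kron p q (unitm k 0) I) z (c*p+b)%nat = indk k c * rsum q (fun d => I b d * z d).
Proof. intros Hb Hn. rewrite mvec_kron_blk by auto.
  setoid_rewrite unitm_ind. rewrite (rsum_single n 0); auto.
  - rewrite ind_eq. simpl. ring.
  - intros; rewrite (ind_ne 0 i) by auto; ring. Qed.

Lemma W3 n p q k I z c b : (b < p)%nat -> (0 < n)%nat ->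
  mvec (n*q) (kron p q (unitm k 0) I) z (c*p+b)%nat = indk k c * rsum q (fun d => I b d * z d).
Proof. intros Hb Hn. rewrite mvec_kron_blk by auto.
  setoid_rewrite unitm_ind. rewrite (rsum_single n 0); auto.
  - rewrite ind_eq. simpl. ring.
  - intros; rewrite (ind_ne 0 i) by auto; ring. Qed.

Lemma kron_idm_0 n q S z d : (d < q)%nat ->
  mvec (n*q) (kron q q S idm) z d = rsum n (fun c => S 0%nat c * z (c*q+d)%nat).
Proof. intros Hd. exact (kron_idm_pt n q S z 0 d Hd). Qed.

Lemma rhs_u_pt m p n q HxL MxL SxL SxR IF2C tau u v a b :
  (0 < m)%nat -> (0 < n)%nat -> (a < m)%nat -> (b < p)%nat -> HxL a a <> 0 ->
  HxL a a * rhs_u m p n q HxL MxL SxL SxR IF2C tau u v (a*p+b)%nat =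
   - rsum m (fun c => MxL a c * u (c*p+b)%nat)
   + indk (m-1) a * rsum m (fun c => SxL (m-1)%nat c * u (c*p+b)%nat)
   + /2 * SxL (m-1)%nat a * (u ((m-1)*p+b)%nat - rsum q (fun d => IF2C b d * v d))
   - tau * indk (m-1) a * (u ((m-1)*p+b)%nat - rsum q (fun d => IF2C b d * v d))
   - /2 * indk (m-1) a * (rsum m (fun c => SxL (m-1)%nat c * u (c*p+b)%nat)
                - rsum q (fun d => IF2C b d * rsum n (fun c => SxR 0%nat c * v (c*q+d)%nat))).
Proof. intros Hm Hn Ha Hb Hh.
  unfold rhs_u, E0L, ELR; cbv zeta. unfold vsub, vadd, vopp, vscale; cbv beta.
  rewrite !dinv_pt by auto.
  rewrite !W1 by (auto; lia). rewrite !W2 by auto.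
  rewrite !kron_idm_pt by auto.
  setoid_rewrite ent_dinv; auto. unfold madd, mopp.
  setoid_rewrite ent_E0S; try lia.
  setoid_rewrite W1; try lia. setoid_rewrite W2; try lia.
  rewrite (rsum_single m (m-1) (fun c => tr SxL a c * _)); try lia.
  2:{ intros; rewrite (ind_ne (m-1) i) by auto; ring. }
  rewrite ind_eq.
  rewrite (rsum_ext q (fun d => IF2C b d * mvec (n * q) (kron q q SxR idm) v d)
     (fun d => IF2C b d * rsum n (fun c => SxR 0%nat c * v (c*q+d)%nat)))
    by (intros; rewrite kron_idm_0 by auto; reflexivity).
  rewrite (rsum_ext m _ (fun c => / HxL a a * (- (MxL a c * u (c*p+b)%nat)) + / HxL a a * (indk (m-1) a * (SxL (m-1)%nat c * u (c*p+b)%nat))))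
    by (intros; ring).
  rewrite rsum_plus, !rsum_scal.
  rewrite (rsum_ext m (fun c => - _) (fun c => (-1) * (MxL a c * u (c*p+b)%nat))) by (intros; ring).
  rewrite rsum_scal. unfold tr. field. auto.
Qed.

Lemma W4 m p q k I z c d : (d < q)%nat -> (k < m)%nat ->
  mvec (m*p) (kron q p (tr (unitm k 0)) I) z (c*q+d)%nat = indk 0 c * rsum p (fun b => I d b * z (k*p+b)%nat).
Proof. intros Hd Hk. rewrite mvec_kron_blk by auto. unfold tr at 1.
  setoid_rewrite unitm_ind. rewrite (rsum_single m k); auto.
  - rewrite ind_eq. ring.
  - intros; rewrite (ind_ne k i) by auto; ring. Qed.

Lemma rhs_v_pt m p n q HxR MxR SxL SxR IC2F tau u v c d :
  (0 < m)%nat -> (0 < n)%nat -> (c < n)%nat -> (d < q)%nat -> HxR c c <> 0 ->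
  HxR c c * rhs_v m p n q HxR MxR SxL SxR IC2F tau u v (c*q+d)%nat =
   - rsum n (fun e => MxR c e * v (e*q+d)%nat) - indk 0 c * rsum n (fun e => SxR 0%nat e * v (e*q+d)%nat)
   - /2 * SxR 0%nat c * (v d - rsum p (fun b => IC2F d b * u ((m-1)*p+b)%nat))
   - tau * indk 0 c * (v d - rsum p (fun b => IC2F d b * u ((m-1)*p+b)%nat))
   + /2 * indk 0 c * (rsum n (fun e => SxR 0%nat e * v (e*q+d)%nat)
        - rsum p (fun b => IC2F d b * rsum m (fun e => SxL (m-1)%nat e * u (e*p+b)%nat))).
Proof. intros Hm Hn Hc Hd Hh.
  unfold rhs_v, E0R, ERL, ELR; cbv zeta. unfold vsub, vadd, vopp, vscale; cbv beta.
  rewrite !dinv_pt by auto.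
  rewrite !W1 by (auto; lia). rewrite !W4 by (auto; lia).
  rewrite !kron_idm_pt by auto.
  setoid_rewrite ent_dinv; auto. unfold madd, mopp.
  setoid_rewrite ent_E0S; try lia.
  setoid_rewrite W1; try lia. setoid_rewrite W4; try lia.
  rewrite (rsum_single n 0 (fun e => tr SxR c e * _)); try lia.
  2:{ intros; rewrite (ind_ne 0 i) by auto; ring. }
  rewrite ind_eq.
  rewrite (rsum_ext p (fun b => IC2F d b * mvec (m * p) (kron p p SxL idm) u ((m-1)*p+b)%nat)
     (fun b => IC2F d b * rsum m (fun e => SxL (m-1)%nat e * u (e*p+b)%nat)))
    by (intros; rewrite kron_idm_pt by auto; reflexivity).
  rewrite (rsum_ext n _ (fun e => / HxR c c * (- (MxR c e * v (e*q+d)%nat)) + / HxR c c * (- (indk 0 c * (SxR 0%nat e * v (e*q+d)%nat)))))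
    by (intros; ring).
  rewrite rsum_plus, !rsum_scal.
  rewrite (rsum_ext n (fun e => - (MxR c e * _)) (fun e => (-1) * (MxR c e * v (e*q+d)%nat))) by (intros; ring).
  rewrite (rsum_ext n (fun e => - (indk 0 c * _)) (fun e => (- indk 0 c) * (SxR 0%nat e * v (e*q+d)%nat))) by (intros; ring).
  rewrite !rsum_scal. unfold tr. simpl. field. auto.
Qed.

Lemma offdiag_tr n D : offdiag0 n D -> offdiag0 n (tr D).
Proof. intros H i j Hi Hj Hne; unfold tr; apply H; auto. Qed.

Lemma K1pt m p A B z a b : offdiag0 m A -> offdiag0 p B -> (a < m)%nat -> (b < p)%nat ->
  mvec (m*p) (kron p p A B) z (a*p+b)%nat = A a a * (B b b * z (a*p+b)%nat).
Proof. intros HA HB Ha Hb. rewrite kron_diag_pt by auto.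
  apply (diag_coll_r m A a (fun c => B b b * z (c*p+b)%nat)); auto. Qed.

Lemma K3pt m p M B z a b : offdiag0 p B -> (b < p)%nat ->
  mvec (m*p) (kron p p M B) z (a*p+b)%nat = B b b * rsum m (fun c => M a c * z (c*p+b)%nat).
Proof. intros HB Hb. rewrite kron_diag_pt by auto. rewrite <- rsum_scal. apply rsum_ext; intros; ring. Qed.

Lemma K4pt m p k S B z a b : offdiag0 p B -> (b < p)%nat -> (k < m)%nat ->
  mvec (m*p) (kron p p (mmul m (unitm k k) S) B) z (a*p+b)%nat
  = indk k a * (B b b * rsum m (fun c => S k c * z (c*p+b)%nat)).
Proof. intros HB Hb Hk. rewrite kron_diag_pt by auto. setoid_rewrite ent_E0S; auto.
  rewrite <- !rsum_scal. apply rsum_ext; intros; ring. Qed.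

Lemma K4tpt m p k S B z a b : offdiag0 p B -> (b < p)%nat -> (k < m)%nat ->
  mvec (m*p) (kron p p (tr (mmul m (unitm k k) S)) B) z (a*p+b)%nat
  = S k a * (B b b * z (k*p+b)%nat).
Proof. intros HB Hb Hk. rewrite kron_diag_pt by auto. unfold tr. setoid_rewrite ent_E0S; auto.
  rewrite (rsum_single m k); auto. rewrite ind_eq; ring.
  intros; rewrite (ind_ne k i) by auto; ring. Qed.

Lemma K5pt m p k B z a b : offdiag0 p B -> (b < p)%nat -> (k < m)%nat ->
  mvec (m*p) (kron p p (unitm k k) B) z (a*p+b)%nat = indk k a * (B b b * z (k*p+b)%nat).
Proof. intros HB Hb Hk. rewrite kron_diag_pt by auto. setoid_rewrite unitm_ind.
  rewrite (rsum_single m k); auto. rewrite ind_eq; ring.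
  intros; rewrite (ind_ne k i) by auto; ring. Qed.

Lemma K5tpt m p k B z a b : offdiag0 p B -> (b < p)%nat -> (k < m)%nat ->
  mvec (m*p) (kron p p (tr (unitm k k)) B) z (a*p+b)%nat = indk k a * (B b b * z (k*p+b)%nat).
Proof. intros HB Hb Hk. rewrite kron_diag_pt by auto. unfold tr. setoid_rewrite unitm_ind.
  rewrite (rsum_single m k); auto. rewrite ind_eq; ring.
  intros; rewrite (ind_ne k i) by auto; ring. Qed.

Lemma K9pt m n p q k S B z a b : (k < m)%nat -> (0 < n)%nat -> (b < p)%nat ->
  mvec (n*q) (kron p q (mmul m (tr S) (unitm k 0)) B) z (a*p+b)%nat
  = S k a * rsum q (fun d => B b d * z d).
Proof. intros Hk Hn Hb. rewrite mvec_kron_blk by auto.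
  - setoid_rewrite ent_trSE; auto. rewrite (rsum_single n 0); auto.
    + rewrite ind_eq. simpl. ring.
    + intros; rewrite (ind_ne 0 i) by auto; ring.
Qed.

Lemma K11pt n p q k B z a b : (0 < n)%nat -> (b < p)%nat ->
  mvec (n*q) (kron p q (unitm k 0) B) z (a*p+b)%nat
  = indk k a * rsum q (fun d => B b d * z d).
Proof. intros Hn Hb. rewrite mvec_kron_blk by auto. setoid_rewrite unitm_ind.
  rewrite (rsum_single n 0); auto.
  - rewrite ind_eq. simpl. ring.
  - intros; rewrite (ind_ne 0 i) by auto; ring.
Qed.

Lemma K10tpt n p q k SR B z a b : (0 < n)%nat -> (b < p)%nat ->
  mvec (n*q) (kron p q (tr (mmul n (tr SR) (tr (unitm k 0)))) B) z (a*p+b)%nat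
  = indk k a * rsum q (fun d => B b d * rsum n (fun e => SR 0%nat e * z (e*q+d)%nat)).
Proof. intros Hn Hb. rewrite mvec_kron_blk by auto. unfold tr at 1. setoid_rewrite ent_trStrE; auto.
  transitivity (rsum n (fun c => rsum q (fun d => indk k a * (B b d * (SR 0%nat c * z (c*q+d)%nat))))).
  { apply rsum_ext; intros c Hc. rewrite <- rsum_scal. apply rsum_ext; intros; ring. }
  rewrite rsum_swap, <- rsum_scal. apply rsum_ext; intros d Hd. rewrite rsum_scal, <- (rsum_scal n (B b d)). reflexivity.
Qed.

Lemma K9tpt m p q k S B z c d : (k < m)%nat -> (d < q)%nat ->
  mvec (m*p) (kron q p (tr (mmul m (tr S) (unitm k 0))) B) z (c*q+d)%nat
  = indk 0 c * rsum p (fun b => B d b * rsum m (fun a => S k a * z (a*p+b)%nat)).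
Proof. intros Hk Hd. rewrite mvec_kron_blk by auto. unfold tr at 1. setoid_rewrite ent_trSE; auto.
  transitivity (rsum m (fun a => rsum p (fun b => indk 0 c * (B d b * (S k a * z (a*p+b)%nat))))).
  { apply rsum_ext; intros a Ha. rewrite <- rsum_scal. apply rsum_ext; intros; ring. }
  rewrite rsum_swap, <- rsum_scal. apply rsum_ext; intros b Hb. rewrite rsum_scal, <- (rsum_scal m (B d b)). reflexivity.
Qed.

Lemma K10pt m n p q k SR B z c d : (0 < n)%nat -> (k < m)%nat -> (d < q)%nat ->
  mvec (m*p) (kron q p (mmul n (tr SR) (tr (unitm k 0))) B) z (c*q+d)%nat
  = SR 0%nat c * rsum p (fun b => B d b * z (k*p+b)%nat).
Proof. intros Hn Hk Hd. rewrite mvec_kron_blk by auto. setoid_rewrite ent_trStrE; auto.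
  rewrite (rsum_single m k); auto.
  - rewrite ind_eq. ring.
  - intros; rewrite (ind_ne k i) by auto; ring.
Qed.

Lemma K11tpt m p q k B z c d : (k < m)%nat -> (d < q)%nat ->
  mvec (m*p) (kron q p (tr (unitm k 0)) B) z (c*q+d)%nat
  = indk 0 c * rsum p (fun b => B d b * z (k*p+b)%nat).
Proof. intros Hk Hd. rewrite mvec_kron_blk by auto. unfold tr at 1. setoid_rewrite unitm_ind.
  rewrite (rsum_single m k); auto.
  - rewrite ind_eq. ring.
  - intros; rewrite (ind_ne k i) by auto; ring.
Qed.

Lemma rsum_Bfac q (B : mat) b c J g : (forall d, (d < q)%nat -> B b d = c * J d) ->
  rsum q (fun d => B b d * g d) = c * rsum q (fun d => J d * g d).
Proof. intros H. rewrite <- rsum_scal. apply rsum_ext; intros d Hd. rewrite H by auto. ring. Qed.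

Lemma GU_pt nxL nyL nxR nyR HxL HyL HyR MxL SxL SxR IF2C IC2F tau u v a b :
  (2 <= nxL)%nat -> (0 < nxR)%nat -> offdiag0 nxL HxL -> HxL a a <> 0 ->
  offdiag0 nyL HyL -> is_symm nxL MxL ->
  mat_eq nyR nyL (mmul nyR HyR IC2F) (tr (mmul nyL HyL IF2C)) ->
  (a < nxL)%nat -> (b < nyL)%nat ->
  let ru := rhs_u nxL nyL nxR nyR HxL MxL SxL SxR IF2C tau u v in
  mvec (nxL*nyL) (tr (kron nyL nyL HxL HyL)) ru (a*nyL+b)%nat
  + mvec (nxL*nyL) (tr (tr (kron nyL nyL HxL HyL))) ru (a*nyL+b)%nat
  + (mvec (nxL*nyL) (kron nyL nyL MxL HyL) u (a*nyL+b)%nat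
     + mvec (nxL*nyL) (tr (kron nyL nyL MxL HyL)) u (a*nyL+b)%nat)
  + - (mvec (nxL*nyL) (kron nyL nyL (mmul nxL (E0L nxL) SxL) HyL) u (a*nyL+b)%nat
     + mvec (nxL*nyL) (tr (kron nyL nyL (mmul nxL (E0L nxL) SxL) HyL)) u (a*nyL+b)%nat)
  + tau * (mvec (nxL*nyL) (kron nyL nyL (E0L nxL) HyL) u (a*nyL+b)%nat
     + mvec (nxL*nyL) (tr (kron nyL nyL (E0L nxL) HyL)) u (a*nyL+b)%nat)
  + mvec (nxR*nyR) (kron nyL nyR (mmul nxL (tr SxL) (ELR nxL)) (mmul nyL HyL IF2C)) v (a*nyL+b)%nat
  + - mvec (nxR*nyR) (tr (kron nyR nyL (mmul nxR (tr SxR) (ERL nxL)) (mmul nyR HyR IC2F))) v (a*nyL+b)%nat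
  + - (2 * tau) * mvec (nxR*nyR) (kron nyL nyR (ELR nxL) (mmul nyL HyL IF2C)) v (a*nyL+b)%nat
  = 0.
Proof. intros HnxL HnxR HHx Hha HHy HM HI Ha Hb ru.
  assert (HR := rhs_u_pt nxL nyL nxR nyR HxL MxL SxL SxR IF2C tau u v a b ltac:(lia) HnxR Ha Hb Hha).
  fold ru in HR.
  rewrite !tr_kron.
  rewrite (K1pt nxL nyL (tr HxL)) by (auto using offdiag_tr).
  rewrite (K1pt nxL nyL (tr (tr HxL))) by (auto using offdiag_tr).
  rewrite (K3pt nxL nyL MxL) by auto.
  rewrite (K3pt nxL nyL (tr MxL)) by (auto using offdiag_tr).
  unfold ERL, E0L, ELR.
  rewrite (K4pt nxL nyL) by (auto; lia).
  rewrite (K4tpt nxL nyL) by (auto using offdiag_tr; lia).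
  rewrite (K5pt nxL nyL) by (auto; lia).
  rewrite (K5tpt nxL nyL) by (auto using offdiag_tr; lia).
  rewrite (K9pt nxL nxR nyL nyR) by (auto; lia).

  rewrite (K10tpt nxR nyL nyR) by auto.
  rewrite (K11pt nxR nyL nyR) by auto.
  rewrite (rsum_Bfac nyR (mmul nyL HyL IF2C) b (HyL b b) (IF2C b)) by (intros; apply ent_DX; auto).
  rewrite (rsum_Bfac nyR (tr (mmul nyR HyR IC2F)) b (HyL b b) (IF2C b)).
  2:{ intros d Hd. unfold tr. rewrite HI by auto. unfold tr. apply ent_DX; auto. }
  rewrite (rsum_ext nxL (fun c => tr MxL a c * u (c*nyL+b)%nat) (fun c => MxL a c * u (c*nyL+b)%nat))
    by (intros; unfold tr; rewrite HM by auto; reflexivity).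
  unfold tr. clearbody ru.
  replace (HxL a a * (HyL b b * ru (a * nyL + b)%nat)) with (HyL b b * (HxL a a * ru (a * nyL + b)%nat)) by ring.
  rewrite HR. lra.
Qed.

Lemma GV_pt nxL nyL nxR nyR HxR HyL HyR MxR SxL SxR IF2C IC2F tau u v c d :
  (2 <= nxL)%nat -> (0 < nxR)%nat -> offdiag0 nxR HxR -> HxR c c <> 0 ->
  offdiag0 nyR HyR -> is_symm nxR MxR ->
  mat_eq nyR nyL (mmul nyR HyR IC2F) (tr (mmul nyL HyL IF2C)) ->
  (c < nxR)%nat -> (d < nyR)%nat ->
  let rv := rhs_v nxL nyL nxR nyR HxR MxR SxL SxR IC2F tau u v in
  mvec (nxR*nyR) (tr (kron nyR nyR HxR HyR)) rv (c*nyR+d)%nat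
  + mvec (nxR*nyR) (tr (tr (kron nyR nyR HxR HyR))) rv (c*nyR+d)%nat
  + (mvec (nxR*nyR) (kron nyR nyR MxR HyR) v (c*nyR+d)%nat
     + mvec (nxR*nyR) (tr (kron nyR nyR MxR HyR)) v (c*nyR+d)%nat)
  + (mvec (nxR*nyR) (kron nyR nyR (mmul nxR E0R SxR) HyR) v (c*nyR+d)%nat
     + mvec (nxR*nyR) (tr (kron nyR nyR (mmul nxR E0R SxR) HyR)) v (c*nyR+d)%nat)
  + tau * (mvec (nxR*nyR) (kron nyR nyR E0R HyR) v (c*nyR+d)%nat
     + mvec (nxR*nyR) (tr (kron nyR nyR E0R HyR)) v (c*nyR+d)%nat)
  + mvec (nxL*nyL) (tr (kron nyL nyR (mmul nxL (tr SxL) (ELR nxL)) (mmul nyL HyL IF2C))) u (c*nyR+d)%nat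
  + - mvec (nxL*nyL) (kron nyR nyL (mmul nxR (tr SxR) (ERL nxL)) (mmul nyR HyR IC2F)) u (c*nyR+d)%nat
  + - (2 * tau) * mvec (nxL*nyL) (tr (kron nyL nyR (ELR nxL) (mmul nyL HyL IF2C))) u (c*nyR+d)%nat
  = 0.
Proof. intros HnxL HnxR HHx Hha HHy HM HI Hc Hd rv.
  assert (HR := rhs_v_pt nxL nyL nxR nyR HxR MxR SxL SxR IC2F tau u v c d ltac:(lia) HnxR Hc Hd Hha).
  fold rv in HR.
  rewrite !tr_kron.
  rewrite (K1pt nxR nyR (tr HxR)) by (auto using offdiag_tr).
  rewrite (K1pt nxR nyR (tr (tr HxR))) by (auto using offdiag_tr).
  rewrite (K3pt nxR nyR MxR) by auto.
  rewrite (K3pt nxR nyR (tr MxR)) by (auto using offdiag_tr).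
  unfold ERL, E0R, ELR.
  rewrite (K4pt nxR nyR) by (auto; lia).
  rewrite (K4tpt nxR nyR) by (auto using offdiag_tr; lia).
  rewrite (K5pt nxR nyR) by (auto; lia).
  rewrite (K5tpt nxR nyR) by (auto using offdiag_tr; lia).
  rewrite (K9tpt nxL nyL nyR) by (auto; lia).
  rewrite (K10pt nxL nxR nyL nyR) by (auto; lia).
  rewrite (K11tpt nxL nyL nyR) by (auto; lia).
  rewrite (rsum_Bfac nyL (mmul nyR HyR IC2F) d (HyR d d) (IC2F d)) by (intros; apply ent_DX; auto).
  rewrite !(rsum_Bfac nyL (tr (mmul nyL HyL IF2C)) d (HyR d d) (IC2F d))
    by (intros b Hb; rewrite <- (HI d b) by auto; apply ent_DX; auto).
  rewrite (rsum_ext nxR (fun e => tr MxR c e * v (e*nyR+d)%nat) (fun e => MxR c e * v (e*nyR+d)%nat))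
    by (intros; unfold tr; rewrite HM by auto; reflexivity).
  unfold tr. clearbody rv. simpl.
  replace (HxR c c * (HyR d d * rv (c * nyR + d)%nat)) with (HyR d d * (HxR c c * rv (c * nyR + d)%nat)) by ring.
  rewrite HR. lra.
Qed.

Lemma blk_bounds m p i : (i < m * p)%nat ->
  (i = (i / p) * p + i mod p)%nat /\ (i / p < m)%nat /\ (i mod p < p)%nat.
Proof. intros H. assert (p <> 0%nat) by (intro; subst; lia).
  split; [|split].
  - rewrite (Nat.div_mod_eq i p) at 1. lia.
  - apply Nat.Div0.div_lt_upper_bound. lia.
  - apply Nat.mod_upper_bound; auto. Qed.

Lemma energy_deriv (nxL nyL nxR nyR : nat) (HxL HyL HxR HyR MxL MxR SxL SxR IF2C IC2F : mat) (tau : R)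
  (u ut v vt : R -> vec) t :
  (2 <= nxL)%nat -> (0 < nxR)%nat ->
  is_diag_pd nxL HxL -> is_diag_pd nyL HyL -> is_diag_pd nxR HxR -> is_diag_pd nyR HyR ->
  is_symm nxL MxL -> is_symm nxR MxR ->
  mat_eq nyR nyL (mmul nyR HyR IC2F) (tr (mmul nyL HyL IF2C)) ->
     (forall t i, (i < nxL * nyL)%nat ->
        derivable_pt_lim (fun s => u s i) t (ut t i) /\
        derivable_pt_lim (fun s => ut s i) t
          (rhs_u nxL nyL nxR nyR HxL MxL SxL SxR IF2C tau (u t) (v t) i)) ->
     (forall t i, (i < nxR * nyR)%nat ->
        derivable_pt_lim (fun s => v s i) t (vt t i) /\
        derivable_pt_lim (fun s => vt s i) t
          (rhs_v nxL nyL nxR nyR HxR MxR SxL SxR IC2F tau (u t) (v t) i)) ->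
  derivable_pt_lim
         (fun s => energy nxL nyL nxR nyR HxL HyL HxR HyR MxL MxR SxL SxR IF2C IC2F
                     tau (u s) (ut s) (v s) (vt s)) t 0.
Proof. intros HnxL HnxR [HxLo HxLp] [HyLo HyLp] [HxRo HxRp] [HyRo HyRp] HML HMR HI Hu Hv.
  eapply dpl_ext_val.
  { unfold energy; cbv zeta.
    repeat first [apply dpl_minus | apply dpl_plus | apply dpl_scal | apply bform_deriv
      | (intros i Hi; first [exact (proj1 (Hu t i Hi)) | exact (proj2 (Hu t i Hi)) | exact (proj1 (Hv t i Hi)) | exact (proj2 (Hv t i Hi))])]. }
  set (ru := rhs_u nxL nyL nxR nyR HxL MxL SxL SxR IF2C tau (u t) (v t)).
  set (rv := rhs_v nxL nyL nxR nyR HxR MxR SxL SxR IC2F tau (u t) (v t)).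
  rewrite (dot_mvec_tr _ _ ru (kron nyL nyL HxL HyL)), (dot_mvec_tr _ _ ru (tr (kron nyL nyL HxL HyL))).
  rewrite (dot_mvec_tr _ _ rv (kron nyR nyR HxR HyR)), (dot_mvec_tr _ _ rv (tr (kron nyR nyR HxR HyR))).
  set (GU := vadd (vadd (vadd (vadd (vadd (vadd (vadd
     (mvec (nxL*nyL) (tr (kron nyL nyL HxL HyL)) ru)
     (mvec (nxL*nyL) (tr (tr (kron nyL nyL HxL HyL))) ru))
     (vadd (mvec (nxL*nyL) (kron nyL nyL MxL HyL) (u t))
           (mvec (nxL*nyL) (tr (kron nyL nyL MxL HyL)) (u t))))
     (vopp (vadd (mvec (nxL*nyL) (kron nyL nyL (mmul nxL (E0L nxL) SxL) HyL) (u t))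
                 (mvec (nxL*nyL) (tr (kron nyL nyL (mmul nxL (E0L nxL) SxL) HyL)) (u t)))))
     (vscale tau (vadd (mvec (nxL*nyL) (kron nyL nyL (E0L nxL) HyL) (u t))
                 (mvec (nxL*nyL) (tr (kron nyL nyL (E0L nxL) HyL)) (u t)))))
     (mvec (nxR*nyR) (kron nyL nyR (mmul nxL (tr SxL) (ELR nxL)) (mmul nyL HyL IF2C)) (v t)))
     (vopp (mvec (nxR*nyR) (tr (kron nyR nyL (mmul nxR (tr SxR) (ERL nxL)) (mmul nyR HyR IC2F))) (v t))))
     (vscale (- (2 * tau)) (mvec (nxR*nyR) (kron nyL nyR (ELR nxL) (mmul nyL HyL IF2C)) (v t)))).
  set (GV := vadd (vadd (vadd (vadd (vadd (vadd (vadd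
     (mvec (nxR*nyR) (tr (kron nyR nyR HxR HyR)) rv)
     (mvec (nxR*nyR) (tr (tr (kron nyR nyR HxR HyR))) rv))
     (vadd (mvec (nxR*nyR) (kron nyR nyR MxR HyR) (v t))
           (mvec (nxR*nyR) (tr (kron nyR nyR MxR HyR)) (v t))))
     (vadd (mvec (nxR*nyR) (kron nyR nyR (mmul nxR E0R SxR) HyR) (v t))
           (mvec (nxR*nyR) (tr (kron nyR nyR (mmul nxR E0R SxR) HyR)) (v t))))
     (vscale tau (vadd (mvec (nxR*nyR) (kron nyR nyR E0R HyR) (v t))
                 (mvec (nxR*nyR) (tr (kron nyR nyR E0R HyR)) (v t)))))
     (mvec (nxL*nyL) (tr (kron nyL nyR (mmul nxL (tr SxL) (ELR nxL)) (mmul nyL HyL IF2C))) (u t)))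
     (vopp (mvec (nxL*nyL) (kron nyR nyL (mmul nxR (tr SxR) (ERL nxL)) (mmul nyR HyR IC2F)) (u t))))
     (vscale (- (2 * tau)) (mvec (nxL*nyL) (tr (kron nyL nyR (ELR nxL) (mmul nyL HyL IF2C))) (u t)))).
  transitivity (dot (nxL*nyL) (ut t) GU + dot (nxR*nyR) (vt t) GV).
  - unfold GU, GV. rewrite !dot_vadd, !dot_vopp, !dot_vscale, !dot_vadd. ring.
  - rewrite (dot_zero (nxL*nyL) (ut t) GU), (dot_zero (nxR*nyR) (vt t) GV); [ring| |].
    + intros i Hi. destruct (blk_bounds _ _ _ Hi) as [Hi' [Ha Hb]].
      rewrite Hi'. unfold GV, vadd, vopp, vscale.
      apply (GV_pt nxL nyL nxR nyR HxR HyL HyR MxR SxL SxR IF2C IC2F tau (u t) (v t)); auto.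
      apply Rgt_not_eq, HxRp; auto.
    + intros i Hi. destruct (blk_bounds _ _ _ Hi) as [Hi' [Ha Hb]].
      rewrite Hi'. unfold GU, vadd, vopp, vscale.
      apply (GU_pt nxL nyL nxR nyR HxL HyL HyR MxL SxL SxR IF2C IC2F tau (u t) (v t)); auto.
      apply Rgt_not_eq, HxLp; auto.
Qed.

Lemma qform_blk m p K x : qform (m*p) K x =
  rsum m (fun a => rsum p (fun b => x (a*p+b)%nat * mvec (m*p) K x (a*p+b)%nat)).
Proof. unfold qform, bform, dot. rewrite rsum_block. reflexivity. Qed.

Lemma bform_blk m p n q K x y : bform (m*p) (n*q) x K y =
  rsum m (fun a => rsum p (fun b => x (a*p+b)%nat * mvec (n*q) K y (a*p+b)%nat)).
Proof. unfold bform, dot. rewrite rsum_block. reflexivity. Qed.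

Lemma Q1_nonneg m p H Hy x : is_diag_pd m H -> is_diag_pd p Hy -> 0 <= qform (m*p) (kron p p H Hy) x.
Proof. intros [Ho Hp] [Hyo Hyp]. rewrite qform_blk. apply rsum_nonneg; intros a Ha.
  apply rsum_nonneg; intros b Hb. rewrite K1pt by auto.
  assert (0 < H a a) by auto. assert (0 < Hy b b) by auto.
  replace (x (a * p + b)%nat * (H a a * (Hy b b * x (a * p + b)%nat))) with
    ((H a a * Hy b b) * (x (a * p + b)%nat * x (a * p + b)%nat)) by ring.
  apply Rmult_le_pos. nra. nra. Qed.

Lemma Q3_red m p M Hy x : offdiag0 p Hy ->
  qform (m*p) (kron p p M Hy) x = rsum p (fun b => Hy b b * qform m M (fun a => x (a*p+b)%nat)).
Proof. intros Hyo. rewrite qform_blk.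
  rewrite (rsum_ext m _ (fun a => rsum p (fun b => Hy b b * (x (a*p+b)%nat * rsum m (fun c => M a c * x (c*p+b)%nat))))).
  2:{ intros a Ha. apply rsum_ext; intros b Hb. rewrite K3pt by auto. ring. }
  rewrite rsum_swap. apply rsum_ext; intros b Hb. rewrite rsum_scal. reflexivity. Qed.

Lemma Q4_red m p k S Hy x : offdiag0 p Hy -> (k < m)%nat ->
  qform (m*p) (kron p p (mmul m (unitm k k) S) Hy) x =
  rsum p (fun b => Hy b b * x (k*p+b)%nat * rsum m (fun c => S k c * x (c*p+b)%nat)).
Proof. intros Hyo Hk. rewrite qform_blk.
  rewrite (rsum_ext m _ (fun a => indk k a * rsum p (fun b => Hy b b * x (a*p+b)%nat * rsum m (fun c => S k c * x (c*p+b)%nat)))).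
  2:{ intros a Ha. rewrite <- rsum_scal. apply rsum_ext; intros b Hb. rewrite K4pt by auto. ring. }
  rewrite rsum_ind_l by auto. reflexivity. Qed.

Lemma Q5_red m p k Hy x : offdiag0 p Hy -> (k < m)%nat ->
  qform (m*p) (kron p p (unitm k k) Hy) x = rsum p (fun b => Hy b b * x (k*p+b)%nat * x (k*p+b)%nat).
Proof. intros Hyo Hk. rewrite qform_blk.
  rewrite (rsum_ext m _ (fun a => indk k a * rsum p (fun b => Hy b b * x (a*p+b)%nat * x (k*p+b)%nat))).
  2:{ intros a Ha. rewrite <- rsum_scal. apply rsum_ext; intros b Hb. rewrite K5pt by auto. ring. }
  rewrite rsum_ind_l by auto. reflexivity. Qed.

Lemma B9_red m p n q k S Hy I x y : offdiag0 p Hy -> (k < m)%nat -> (0 < n)%nat ->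
  bform (m*p) (n*q) x (kron p q (mmul m (tr S) (unitm k 0)) (mmul p Hy I)) y =
  rsum p (fun b => Hy b b * rsum m (fun a => S k a * x (a*p+b)%nat) * rsum q (fun d => I b d * y d)).
Proof. intros Hyo Hk Hn. rewrite bform_blk.
  rewrite (rsum_ext m _ (fun a => rsum p (fun b => (Hy b b * rsum q (fun d => I b d * y d)) * (S k a * x (a*p+b)%nat)))).
  2:{ intros a Ha. apply rsum_ext; intros b Hb. rewrite K9pt by auto.
      rewrite (rsum_Bfac q (mmul p Hy I) b (Hy b b) (I b)) by (intros; apply ent_DX; auto). ring. }
  rewrite rsum_swap. apply rsum_ext; intros b Hb. rewrite rsum_scal. ring. Qed.

Lemma B11_red m p n q k Hy I x y : offdiag0 p Hy -> (k < m)%nat -> (0 < n)%nat ->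
  bform (m*p) (n*q) x (kron p q (unitm k 0) (mmul p Hy I)) y =
  rsum p (fun b => Hy b b * x (k*p+b)%nat * rsum q (fun d => I b d * y d)).
Proof. intros Hyo Hk Hn. rewrite bform_blk.
  rewrite (rsum_ext m _ (fun a => indk k a * rsum p (fun b => Hy b b * x (a*p+b)%nat * rsum q (fun d => I b d * y d)))).
  2:{ intros a Ha. rewrite <- rsum_scal. apply rsum_ext; intros b Hb. rewrite K11pt by auto.
      rewrite (rsum_Bfac q (mmul p Hy I) b (Hy b b) (I b)) by (intros; apply ent_DX; auto). ring. }
  rewrite rsum_ind_l by auto. reflexivity. Qed.

Lemma B10_red m p n q k SR HR J x y : offdiag0 q HR -> (k < m)%nat -> (0 < n)%nat ->
  bform (n*q) (m*p) y (kron q p (mmul n (tr SR) (tr (unitm k 0))) (mmul q HR J)) x =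
  rsum q (fun d => HR d d * rsum n (fun c => SR 0%nat c * y (c*q+d)%nat) * rsum p (fun b => J d b * x (k*p+b)%nat)).
Proof. intros HRo Hk Hn. rewrite bform_blk.
  rewrite (rsum_ext n _ (fun c => rsum q (fun d => (HR d d * rsum p (fun b => J d b * x (k*p+b)%nat)) * (SR 0%nat c * y (c*q+d)%nat)))).
  2:{ intros c Hc. apply rsum_ext; intros d Hd. rewrite K10pt by auto.
      rewrite (rsum_Bfac p (mmul q HR J) d (HR d d) (J d)) by (intros; apply ent_DX; auto). ring. }
  rewrite rsum_swap. apply rsum_ext; intros d Hd. rewrite rsum_scal. ring. Qed.

Lemma qformM m k M Mt S hal x : (k < m)%nat ->
  mat_eq m m M (madd Mt (mscale hal (mmul m (tr (mmul m (unitm k k) S)) (mmul m (unitm k k) S)))) ->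
  qform m M x = qform m Mt x + hal * (rsum m (fun c => S k c * x c) * rsum m (fun c => S k c * x c)).
Proof. intros Hk HM. unfold qform, bform, dot, mvec.
  rewrite (rsum_ext m (fun a => x a * rsum m (fun c => M a c * x c))
     (fun a => x a * rsum m (fun c => Mt a c * x c) + hal * (S k a * x a) * rsum m (fun c => S k c * x c))).
  2:{ intros a Ha. rewrite (rsum_ext m (fun c => M a c * x c) (fun c => Mt a c * x c + (hal * S k a) * (S k c * x c))).
      - rewrite rsum_plus, rsum_scal. ring.
      - intros c Hc. rewrite HM by auto. unfold madd, mscale. unfold mmul at 1. unfold tr.
        rewrite (rsum_ext m _ (fun l => indk k l * (S k a * S k c))).
        + rewrite rsum_ind_l by auto. ring.
        + intros l Hl. rewrite !ent_E0S by auto. unfold indk. destruct (Nat.eqb l k); ring. }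
  rewrite rsum_plus, rsum_scal_r, rsum_scal. ring. Qed.

Lemma atomA p q Hy HR I J (x y : vec) :
  (forall d b, (d < q)%nat -> (b < p)%nat -> HR d d * J d b = Hy b b * I b d) ->
  rsum q (fun d => HR d d * y d * rsum p (fun b => J d b * x b)) =
  rsum p (fun b => Hy b b * x b * rsum q (fun d => I b d * y d)).
Proof. intros K.
  rewrite (rsum_ext q _ (fun d => rsum p (fun b => Hy b b * x b * (I b d * y d)))).
  - rewrite rsum_swap. apply rsum_ext; intros b Hb. rewrite rsum_scal. reflexivity.
  - intros d Hd. rewrite <- rsum_scal. apply rsum_ext; intros b Hb.
    replace (HR d d * y d * (J d b * x b)) with ((HR d d * J d b) * (x b * y d)) by ring.
    rewrite K by auto. ring. Qed.

Lemma qform_psd_red q HR X (y : vec) : offdiag0 q HR ->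
  qform q (mmul q HR X) y = rsum q (fun d => HR d d * y d * rsum q (fun e => X d e * y e)).
Proof. intros HRo. unfold qform, bform, dot, mvec. apply rsum_ext; intros d Hd.
  rewrite (rsum_ext q _ (fun e => HR d d * (X d e * y e))) by (intros; rewrite ent_DX by auto; ring).
  rewrite rsum_scal. ring. Qed.

Lemma inner_red p q J I (y : vec) d : (d < q)%nat ->
  rsum q (fun e => madd idm (mopp (mmul p J I)) d e * y e) =
  y d - rsum p (fun b => J d b * rsum q (fun e => I b e * y e)).
Proof. intros Hd. unfold madd, mopp, mmul.
  rewrite (rsum_ext q _ (fun e => indk d e * y e - rsum p (fun b => J d b * (I b e * y e)))).
  2:{ intros e He. rewrite idm_ind.
      transitivity (indk d e * y e - rsum p (fun l => J d l * I l e) * y e). ring.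
      f_equal. rewrite <- rsum_scal_r. apply rsum_ext; intros; ring. }
  rewrite rsum_minus, rsum_ind_l by auto. f_equal.
  rewrite rsum_swap. apply rsum_ext; intros b Hb. apply rsum_scal. Qed.

Lemma atomB p q Hy HR I J (y : vec) : offdiag0 q HR ->
  (forall d b, (d < q)%nat -> (b < p)%nat -> HR d d * J d b = Hy b b * I b d) ->
  qform q (mmul q HR (madd idm (mopp (mmul p J I)))) y =
  rsum q (fun d => HR d d * y d * y d)
  - rsum p (fun b => Hy b b * rsum q (fun d => I b d * y d) * rsum q (fun d => I b d * y d)).
Proof. intros HRo K. rewrite qform_psd_red by auto.
  rewrite (rsum_ext q _ (fun d => HR d d * y d * y d - HR d d * y d * rsum p (fun b => J d b * rsum q (fun e => I b e * y e)))).
  2:{ intros d Hd. rewrite inner_red by auto. ring. }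
  rewrite rsum_minus. f_equal.
  apply (atomA p q Hy HR I J (fun b => rsum q (fun e => I b e * y e)) y K). Qed.

Lemma atomC p q Hy HR I J (x : vec) : offdiag0 p Hy ->
  (forall d b, (d < q)%nat -> (b < p)%nat -> HR d d * J d b = Hy b b * I b d) ->
  qform p (mmul p Hy (madd idm (mopp (mmul q I J)))) x =
  rsum p (fun b => Hy b b * x b * x b)
  - rsum q (fun d => HR d d * rsum p (fun b => J d b * x b) * rsum p (fun b => J d b * x b)).
Proof. intros Hyo K. rewrite qform_psd_red by auto.
  rewrite (rsum_ext p _ (fun b => Hy b b * x b * x b - Hy b b * x b * rsum q (fun d => I b d * rsum p (fun e => J d e * x e)))).
  2:{ intros b Hb. rewrite inner_red by auto. ring. }
  rewrite rsum_minus. f_equal.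
  symmetry. apply (atomA p q Hy HR I J x (fun d => rsum p (fun e => J d e * x e)) K). Qed.

Lemma quad_nonneg A C s w : 0 < A -> 1 <= 4 * A * C -> 0 <= A * (s * s) - w * s + C * (w * w).
Proof. intros HA HC.
  assert (E: A * (s*s) - w*s + C*(w*w) = A * ((s - w / (2*A)) * (s - w / (2*A))) + (C - / (4*A)) * (w*w)) by (field; lra).
  rewrite E. apply Rplus_le_le_0_compat.
  - apply Rmult_le_pos; [lra | apply Rle_0_sqr].
  - apply Rmult_le_pos; [|apply Rle_0_sqr].
    assert (/ (4*A) <= C). { apply (Rmult_le_reg_l (4*A)); [lra|]. rewrite Rinv_r by lra. lra. }
    lra. Qed.

Ltac split_sums := repeat (rewrite ?rsum_plus, ?rsum_minus, ?rsum_scal).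

Lemma energy_nonneg
  (nxL nyL nxR nyR : nat) (hxL hxR alpha tau : R)
  (HxL HyL HxR HyR MxL MxR MtL MtR SxL SxR IF2C IC2F : mat)
  (HnxL : (2 <= nxL)%nat) (HnyL : (2 <= nyL)%nat)
  (HnxR : (2 <= nxR)%nat) (HnyR : (2 <= nyR)%nat)
  (HhxL : 0 < hxL) (HhxR : 0 < hxR)
  (HHxL : is_diag_pd nxL HxL) (HHyL : is_diag_pd nyL HyL)
  (HHxR : is_diag_pd nxR HxR) (HHyR : is_diag_pd nyR HyR)
  (Halpha : 0 < alpha)
  (HMtLp : is_psd nxL MtL) (HMtRp : is_psd nxR MtR)
  (HMxL : mat_eq nxL nxL MxL
     (madd MtL (mscale (hxL * alpha)
        (mmul nxL (tr (mmul nxL (E0L nxL) SxL)) (mmul nxL (E0L nxL) SxL)))))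
  (HMxR : mat_eq nxR nxR MxR
     (madd MtR (mscale (hxR * alpha)
        (mmul nxR (tr (mmul nxR E0R SxR)) (mmul nxR E0R SxR)))))
  (HI : mat_eq nyR nyL (mmul nyR HyR IC2F) (tr (mmul nyL HyL IF2C)))
  (HIL : is_psd nyL (mmul nyL HyL (madd idm (mopp (mmul nyR IF2C IC2F)))))
  (HIR : is_psd nyR (mmul nyR HyR (madd idm (mopp (mmul nyL IC2F IF2C)))))
  (Htau : Rmax (1 / (2 * alpha * hxL)) (1 / (2 * alpha * hxR)) <= tau)
  (u ut v vt : vec) :
  0 <= energy nxL nyL nxR nyR HxL HyL HxR HyR MxL MxR SxL SxR IF2C IC2F tau u ut v vt.
Proof.
  assert (HyLo : offdiag0 nyL HyL) by exact (proj1 HHyL).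
  assert (HyRo : offdiag0 nyR HyR) by exact (proj1 HHyR).
  assert (HyLp : forall b, (b < nyL)%nat -> 0 < HyL b b) by exact (proj2 HHyL).
  assert (HyRp : forall d, (d < nyR)%nat -> 0 < HyR d d) by exact (proj2 HHyR).
  assert (K : forall d b, (d < nyR)%nat -> (b < nyL)%nat -> HyR d d * IC2F d b = HyL b b * IF2C b d).
  { intros d b Hd Hb. rewrite <- (ent_DX nyR HyR IC2F d b) by auto. rewrite HI by auto.
    unfold tr. apply ent_DX; auto. }
  assert (Ht1 : 1 / (2 * alpha * hxL) <= tau) by (eapply Rle_trans; [apply Rmax_l|exact Htau]).
  assert (Ht2 : 1 / (2 * alpha * hxR) <= tau) by (eapply Rle_trans; [apply Rmax_r|exact Htau]).
  assert (Ct1 : 1 <= 4 * (hxL * alpha) * (tau / 2)).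
  { assert (0 < 2 * alpha * hxL) by nra.
    apply (Rmult_le_compat_l (2 * alpha * hxL)) in Ht1; [|lra].
    replace (2 * alpha * hxL * (1 / (2 * alpha * hxL))) with 1 in Ht1 by (field; lra). lra. }
  assert (Ct2 : 1 <= 4 * (hxR * alpha) * (tau / 2)).
  { assert (0 < 2 * alpha * hxR) by nra.
    apply (Rmult_le_compat_l (2 * alpha * hxR)) in Ht2; [|lra].
    replace (2 * alpha * hxR * (1 / (2 * alpha * hxR))) with 1 in Ht2 by (field; lra). lra. }
  assert (Htau0 : 0 <= tau).
  { assert (0 < 1 / (2 * alpha * hxL)). { apply Rdiv_lt_0_compat; nra. } lra. }
  assert (Q1 := Q1_nonneg nxL nyL HxL HyL ut HHxL HHyL).
  assert (Q1R := Q1_nonneg nxR nyR HxR HyR vt HHxR HHyR).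
  unfold energy; cbv zeta.
  rewrite (Q3_red nxL nyL MxL HyL u) by auto.
  rewrite (Q3_red nxR nyR MxR HyR v) by auto.
  unfold ERL, E0L, ELR, E0R.
  rewrite (Q4_red nxL nyL (nxL-1) SxL HyL u) by (auto; lia).
  rewrite (Q5_red nxL nyL (nxL-1) HyL u) by (auto; lia).
  rewrite (Q4_red nxR nyR 0 SxR HyR v) by (auto; lia).
  rewrite (Q5_red nxR nyR 0 HyR v) by (auto; lia).
  rewrite (B9_red nxL nyL nxR nyR (nxL-1) SxL HyL IF2C u v) by (auto; lia).
  rewrite (B10_red nxL nyL nxR nyR (nxL-1) SxR HyR IC2F u v) by (auto; lia).
  rewrite (B11_red nxL nyL nxR nyR (nxL-1) HyL IF2C u v) by (auto; lia).
  rewrite (rsum_ext nyL (fun b => HyL b b * qform nxL MxL (fun a => u (a*nyL+b)%nat))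
    (fun b => HyL b b * qform nxL MtL (fun a => u (a*nyL+b)%nat)
       + (hxL * alpha) * (HyL b b * (rsum nxL (fun c => SxL (nxL-1)%nat c * u (c*nyL+b)%nat)
                                    * rsum nxL (fun c => SxL (nxL-1)%nat c * u (c*nyL+b)%nat))))).
  2:{ intros b Hb. rewrite (qformM nxL (nxL-1) MxL MtL SxL (hxL*alpha)) by (auto; lia). ring. }
  rewrite (rsum_ext nyR (fun d => HyR d d * qform nxR MxR (fun a => v (a*nyR+d)%nat))
    (fun d => HyR d d * qform nxR MtR (fun a => v (a*nyR+d)%nat)
       + (hxR * alpha) * (HyR d d * (rsum nxR (fun c => SxR 0%nat c * v (c*nyR+d)%nat)
                                    * rsum nxR (fun c => SxR 0%nat c * v (c*nyR+d)%nat))))).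
  2:{ intros d Hd. rewrite (qformM nxR 0 MxR MtR SxR (hxR*alpha)) by (auto; lia). ring. }
  rewrite !rsum_plus, !rsum_scal.
  assert (PM1 : 0 <= rsum nyL (fun b => HyL b b * qform nxL MtL (fun a => u (a*nyL+b)%nat))).
  { apply rsum_nonneg; intros b Hb. apply Rmult_le_pos; [apply Rlt_le; auto|apply HMtLp]. }
  assert (PM2 : 0 <= rsum nyR (fun d => HyR d d * qform nxR MtR (fun a => v (a*nyR+d)%nat))).
  { apply rsum_nonneg; intros d Hd. apply Rmult_le_pos; [apply Rlt_le; auto|apply HMtRp]. }
  cbn [Nat.mul Nat.add].
  pose (ub := fun b => u ((nxL-1)*nyL+b)%nat).
  pose (sL := fun b => rsum nxL (fun c => SxL (nxL-1)%nat c * u (c*nyL+b)%nat)).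
  pose (ivb := fun b => rsum nyR (fun d => IF2C b d * v d)).
  pose (sR := fun d => rsum nxR (fun c => SxR 0%nat c * v (c*nyR+d)%nat)).
  pose (iub := fun d => rsum nyL (fun b => IC2F d b * u ((nxL-1)*nyL+b)%nat)).
  assert (HA := atomA nyL nyR HyL HyR IF2C IC2F ub v K).
  assert (HB := HIR v). rewrite (atomB nyL nyR HyL HyR IF2C IC2F v HyRo K) in HB.
  assert (HC := HIL ub). rewrite (atomC nyL nyR HyL HyR IF2C IC2F ub HyLo K) in HC.
  assert (Fl : 0 <= rsum nyL (fun b => HyL b b * ((hxL*alpha) * (sL b * sL b) - (ub b - ivb b) * sL b
                     + (tau/2) * ((ub b - ivb b) * (ub b - ivb b))))).
  { apply rsum_nonneg; intros b Hb. apply Rmult_le_pos; [apply Rlt_le; auto|].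
    apply quad_nonneg; auto. nra. }
  assert (FlE : rsum nyL (fun b => HyL b b * ((hxL*alpha) * (sL b * sL b) - (ub b - ivb b) * sL b
                     + (tau/2) * ((ub b - ivb b) * (ub b - ivb b)))) =
     hxL*alpha * rsum nyL (fun b => HyL b b * (sL b * sL b)) - rsum nyL (fun b => HyL b b * ub b * sL b)
     + rsum nyL (fun b => HyL b b * sL b * ivb b)
     + tau/2 * (rsum nyL (fun b => HyL b b * ub b * ub b) - 2 * rsum nyL (fun b => HyL b b * ub b * ivb b)
                + rsum nyL (fun b => HyL b b * ivb b * ivb b))).
  { rewrite (rsum_ext nyL _ (fun b => hxL*alpha * (HyL b b * (sL b * sL b)) - HyL b b * ub b * sL b
       + HyL b b * sL b * ivb b + tau/2 * (HyL b b * ub b * ub b - 2 * (HyL b b * ub b * ivb b) + HyL b b * ivb b * ivb b)))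
      by (intros; ring).
    split_sums. reflexivity. }
  assert (Gr : 0 <= rsum nyR (fun d => HyR d d * ((hxR*alpha) * (sR d * sR d) - (- (v d - iub d)) * sR d
                     + (tau/2) * ((- (v d - iub d)) * (- (v d - iub d)))))).
  { apply rsum_nonneg; intros d Hd. apply Rmult_le_pos; [apply Rlt_le; auto|].
    apply quad_nonneg; auto. nra. }
  assert (GrE : rsum nyR (fun d => HyR d d * ((hxR*alpha) * (sR d * sR d) - (- (v d - iub d)) * sR d
                     + (tau/2) * ((- (v d - iub d)) * (- (v d - iub d))))) =
     hxR*alpha * rsum nyR (fun d => HyR d d * (sR d * sR d)) + rsum nyR (fun d => HyR d d * v d * sR d)
     - rsum nyR (fun d => HyR d d * sR d * iub d)
     + tau/2 * (rsum nyR (fun d => HyR d d * v d * v d) - 2 * rsum nyR (fun d => HyR d d * v d * iub d)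
                + rsum nyR (fun d => HyR d d * iub d * iub d))).
  { rewrite (rsum_ext nyR _ (fun d => hxR*alpha * (HyR d d * (sR d * sR d)) + HyR d d * v d * sR d
       - HyR d d * sR d * iub d + tau/2 * (HyR d d * v d * v d - 2 * (HyR d d * v d * iub d) + HyR d d * iub d * iub d)))
      by (intros; ring).
    split_sums. reflexivity. }
  assert (Hpsi : 0 <= tau/2 * ((rsum nyL (fun b => HyL b b * ub b * ub b) - rsum nyR (fun d => HyR d d * iub d * iub d))
      + (rsum nyR (fun d => HyR d d * v d * v d) - rsum nyL (fun b => HyL b b * ivb b * ivb b)))).
  { apply Rmult_le_pos; [lra|]. unfold ub, iub, ivb in *. cbv beta in *. lra. }
  unfold ub, sL, ivb, sR, iub in *. cbv beta in *.
  clear -Q1 Q1R PM1 PM2 HA Fl FlE Gr GrE Hpsi.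
  rewrite FlE in Fl. rewrite GrE in Gr. rewrite HA in Gr.
  match goal with |- 0 <= ?G => remember G as GG eqn:EG end.
  revert Q1 Q1R PM1 PM2 Fl Gr Hpsi EG.
  generalize (qform (nxL * nyL) (kron nyL nyL HxL HyL) ut). intros.

  nra.
Qed.

Theorem mainTheorem3
  (nxL nyL nxR nyR : nat) (hxL hxR alpha tau : R)
  (HxL HyL HxR HyR MxL MxR MtL MtR SxL SxR IF2C IC2F : mat)
  (HnxL : (2 <= nxL)%nat) (HnyL : (2 <= nyL)%nat)
  (HnxR : (2 <= nxR)%nat) (HnyR : (2 <= nyR)%nat)
  (HhxL : 0 < hxL) (HhxR : 0 < hxR)
  (* (i) *)
  (HHxL : is_diag_pd nxL HxL) (HHyL : is_diag_pd nyL HyL)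
  (HHxR : is_diag_pd nxR HxR) (HHyR : is_diag_pd nyR HyR)
  (* (ii) *)
  (Halpha : 0 < alpha)
  (HMxLs : is_symm nxL MxL) (HMxRs : is_symm nxR MxR)
  (HMtLs : is_symm nxL MtL) (HMtLp : is_psd nxL MtL)
  (HMtRs : is_symm nxR MtR) (HMtRp : is_psd nxR MtR)
  (HMxL : mat_eq nxL nxL MxL
     (madd MtL (mscale (hxL * alpha)
        (mmul nxL (tr (mmul nxL (E0L nxL) SxL)) (mmul nxL (E0L nxL) SxL)))))
  (HMxR : mat_eq nxR nxR MxR
     (madd MtR (mscale (hxR * alpha)
        (mmul nxR (tr (mmul nxR E0R SxR)) (mmul nxR E0R SxR)))))
  (* (iii) *)
  (HI : mat_eq nyR nyL (mmul nyR HyR IC2F) (tr (mmul nyL HyL IF2C)))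
  (HIL : is_psd nyL (mmul nyL HyL (madd idm (mopp (mmul nyR IF2C IC2F)))))
  (HIR : is_psd nyR (mmul nyR HyR (madd idm (mopp (mmul nyL IC2F IF2C)))))
  (* (iv) *)
  (Htau : Rmax (1 / (2 * alpha * hxL)) (1 / (2 * alpha * hxR)) <= tau) :
  (forall u ut v vt : vec,
     0 <= energy nxL nyL nxR nyR HxL HyL HxR HyR MxL MxR SxL SxR IF2C IC2F tau
            u ut v vt)
  /\
  (forall u ut v vt : R -> vec,
     (forall t i, (i < nxL * nyL)%nat ->
        derivable_pt_lim (fun s => u s i) t (ut t i) /\
        derivable_pt_lim (fun s => ut s i) t
          (rhs_u nxL nyL nxR nyR HxL MxL SxL SxR IF2C tau (u t) (v t) i)) ->
     (forall t i, (i < nxR * nyR)%nat ->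
        derivable_pt_lim (fun s => v s i) t (vt t i) /\
        derivable_pt_lim (fun s => vt s i) t
          (rhs_v nxL nyL nxR nyR HxR MxR SxL SxR IC2F tau (u t) (v t) i)) ->
     forall t : R,
       derivable_pt_lim
         (fun s => energy nxL nyL nxR nyR HxL HyL HxR HyR MxL MxR SxL SxR IF2C IC2F
                     tau (u s) (ut s) (v s) (vt s)) t 0).
Proof.
  split.
  - intros u ut v vt.
    apply (energy_nonneg nxL nyL nxR nyR hxL hxR alpha tau HxL HyL HxR HyR MxL MxR MtL MtR SxL SxR IF2C IC2F); auto.
  - intros u ut v vt Hu Hv t.
    apply energy_deriv; auto; lia.
Qed.
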